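(* Let $\mathbb{K}$ be an algebraically closed field of characteristic zero, $\mathcal{C}\subset\mathbb{K}^2$ an affine irreducible plane curve, $A=(a,b)\in\mathbb{K}^2$, $d\in\mathbb{K}\setminus\{0\}$, and assume that $\mathcal{C}_0\neq\emptyset$ and that $\mathcal{C}$ is not a circle centered at $A$. Then $\mathfrak{C}(\mathcal{C},A,d)$ is irreducible and special if and only if $\mathcal{C}$ is a line passing through $A$.
   Context: For $\mathcal{C}$ defined by an irreducible polynomial $f(y_1,y_2)$: $\mathfrak{B}(\mathcal{C},A,d)\subset\mathbb{K}^2\times\mathbb{K}^2\times\mathbb{K}$ is the set of $(\bar x,\bar y,w)$ with $f(y_1,y_2)=0$, $(x_1-y_1)^2+(x_2-y_2)^2=d^2$, $(y_2-b)(x_1-y_1)-(y_1-a)(x_2-y_2)=0$, $w((y_1-a)^2+(y_2-b)^2)=1$; $\pi_1,\pi_2$ are the projections $(\bar x,\bar y,w)\mapsto\bar x$, $\mapsto\bar y$; the conchoid $\mathfrak{C}(\mathcal{C},A,d)$ is the Zariski closure of $\pi_1(\mathfrak{B}(\mathcal{C},A,d))$. $\mathcal{C}_0=\{(p_1,p_2)\in\mathcal{C}:(p_1-a)^2+(p_2-b)^2\neq0\}$. An irreducible component $\mathcal{M}$ of $\mathfrak{C}(\mathcal{C},A,d)$ is simple if there is a non-empty Zariski dense $\Omega\subset\mathcal{M}$ with $\mathrm{Card}(\pi_2(\pi_1^{-1}(Q)))=1$ for all $Q\in\Omega$; otherwise special. A circle centered at $A$ of radius $r$ is $(y_1-a)^2+(y_2-b)^2=r^2$.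 *)

(* Defs.v *)
From HB Require Import structures.
From mathcomp Require Import all_boot all_order all_algebra.
Set Implicit Arguments. Unset Strict Implicit. Unset Printing Implicit Defensive.
Import Order.TTheory GRing.Theory Num.Theory.
Local Open Scope ring_scope.

Section Conchoid.
Variable K : closedFieldType.

Definition pt := (K * K)%type.

(* evaluation of a bivariate polynomial g(y1,y2) at p = (p.1, p.2):
   inner variable = y1, outer variable = y2 *)
Definition ev2 (g : {poly {poly K}}) (p : pt) : K := (g.[p.2%:P]).[p.1].

Definition irreducible_elt (g : {poly {poly K}}) : Prop :=
  g != 0 /\ g \isn't a GRing.unit /\
  forall q r : {poly {poly K}}, g = q * r -> q \is a GRing.unit \/ r \is a GRing.unit.

Definition subset_pt (S T : pt -> Prop) := forall p, S p -> T p.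

Definition zcl (S : pt -> Prop) : pt -> Prop :=
  fun p => forall g, (forall q, S q -> ev2 g q = 0) -> ev2 g p = 0.

Definition zclosed (S : pt -> Prop) : Prop := subset_pt (zcl S) S.

Definition irreducible_set (X : pt -> Prop) : Prop :=
  zclosed X /\ (exists p, X p) /\
  forall Z1 Z2, zclosed Z1 -> zclosed Z2 ->
    (forall p, X p -> Z1 p \/ Z2 p) -> subset_pt X Z1 \/ subset_pt X Z2.

Definition irr_component (M X : pt -> Prop) : Prop :=
  irreducible_set M /\ subset_pt M X /\
  forall N, irreducible_set N -> subset_pt M N -> subset_pt N X -> subset_pt N M.

Definition Bset (f : {poly {poly K}}) (a b d : K) (x y : pt) (w : K) : Prop :=
  ev2 f y = 0 /\
  (x.1 - y.1) ^+ 2 + (x.2 - y.2) ^+ 2 = d ^+ 2 /\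
  (y.2 - b) * (x.1 - y.1) - (y.1 - a) * (x.2 - y.2) = 0 /\
  w * ((y.1 - a) ^+ 2 + (y.2 - b) ^+ 2) = 1.

Definition conchoid f a b d : pt -> Prop :=
  zcl (fun x => exists y w, Bset f a b d x y w).

Definition fiber f a b d (Q : pt) : pt -> Prop :=
  fun y => exists w, Bset f a b d Q y w.

Definition simple_component f a b d (M : pt -> Prop) : Prop :=
  irr_component M (conchoid f a b d) /\
  exists Om : pt -> Prop,
    subset_pt Om M /\ (exists Q, Om Q) /\ subset_pt M (zcl Om) /\
    forall Q, Om Q -> exists y, fiber f a b d Q y /\
                        forall y', fiber f a b d Q y' -> y' = y.

Definition special_component f a b d (M : pt -> Prop) : Prop :=
  irr_component M (conchoid f a b d) /\ ~ simple_component f a b d M.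

Definition curve (f : {poly {poly K}}) : pt -> Prop := fun p => ev2 f p = 0.

Definition C0 f (a b : K) : pt -> Prop :=
  fun p => curve f p /\ (p.1 - a) ^+ 2 + (p.2 - b) ^+ 2 != 0.

Definition is_circle_centered f (a b : K) : Prop :=
  exists r : K, forall p, curve f p <-> (p.1 - a) ^+ 2 + (p.2 - b) ^+ 2 = r ^+ 2.

Definition is_line_through f (a b : K) : Prop :=
  exists al be ga : K, (al != 0 \/ be != 0) /\ al * a + be * b + ga = 0 /\
    forall p, curve f p <-> al * p.1 + be * p.2 + ga = 0.

End Conchoid.

(* Main.v *)
Require Import Defs.
From mathcomp Require Import all_boot all_order all_algebra.
From mathcomp Require Import ring.
From Stdlib Require Import Classical.
Import GRing.Theory.
Set Implicit Arguments. Unset Strict Implicit. Unset Printing Implicit Defensive.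
Local Open Scope ring_scope.


Section Basic.
Variable K : closedFieldType.
Implicit Types (g : {poly {poly K}}) (p : pt K).

Lemma ev2MXaddC g (c : {poly K}) p : ev2 (g * 'X + c%:P) p = ev2 g p * p.2 + c.[p.1].
Proof. by rewrite /ev2 hornerMXaddC hornerD hornerM !hornerC. Qed.
Lemma ev2D g (h : {poly {poly K}}) p : ev2 (g + h) p = ev2 g p + ev2 h p.
Proof. by rewrite /ev2 !hornerD. Qed.
Lemma ev2M g (h : {poly {poly K}}) p : ev2 (g * h) p = ev2 g p * ev2 h p.
Proof. by rewrite /ev2 !hornerM. Qed.
Lemma ev2C (c : K) p : ev2 (c%:P%:P) p = c.
Proof. by rewrite /ev2 !hornerC. Qed.
Lemma ev2X1 p : ev2 (('X)%:P) p = p.1.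
Proof. by rewrite /ev2 hornerC hornerX. Qed.
Lemma ev2X2 p : ev2 'X p = p.2.
Proof. by rewrite /ev2 hornerX hornerC. Qed.
Lemma ev2_1 p : ev2 1 p = 1.
Proof. by rewrite /ev2 !hornerC. Qed.
Lemma ev2_0 p : ev2 0 p = 0.
Proof. by rewrite /ev2 !horner0. Qed.

Lemma ev2_unit g p : g \is a GRing.unit -> ev2 g p != 0.
Proof.
move=> gu; apply/eqP=> h0.
have := ev2M g g^-1 p; rewrite mulrV // ev2_1 h0 mul0r => /eqP.
by rewrite oner_eq0.
Qed.

Definition pf (h : pt K -> K) := exists g, forall p, h p = ev2 g p.
Lemma pf_ext h h' : pf h -> (forall p, h p = h' p) -> pf h'.
Proof. by move=> [g hg] e; exists g => x; rewrite -e. Qed.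
Lemma pf_const c : pf (fun _ => c).
Proof. by exists (c%:P%:P) => p; rewrite ev2C. Qed.
Lemma pf_fst : pf (fun p => p.1).
Proof. by exists (('X)%:P) => p; rewrite ev2X1. Qed.
Lemma pf_snd : pf (fun p => p.2).
Proof. by exists 'X => p; rewrite ev2X2. Qed.
Lemma pf_add h h' : pf h -> pf h' -> pf (fun p => h p + h' p).
Proof. by move=> [g hg] [g' hg']; exists (g + g') => p; rewrite ev2D hg hg'. Qed.
Lemma pf_mul h h' : pf h -> pf h' -> pf (fun p => h p * h' p).
Proof. by move=> [g hg] [g' hg']; exists (g * g') => p; rewrite ev2M hg hg'. Qed.
Lemma pf_opp h : pf h -> pf (fun p => - h p).
Proof.
move=> H; apply: pf_ext (pf_mul (pf_const (-1)) H) _ => p; by rewrite mulN1r.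
Qed.
Lemma pf_pow h n : pf h -> pf (fun p => h p ^+ n).
Proof.
move=> H; elim: n => [|n IH]; first by apply: pf_ext (pf_const 1) _ => p; rewrite expr0.
by apply: pf_ext (pf_mul H IH) _ => p; rewrite exprS.
Qed.

Definition upf (h : K -> K) := exists r : {poly K}, forall x, h x = r.[x].
Lemma upf_ext h h' : upf h -> (forall x, h x = h' x) -> upf h'.
Proof. by move=> [g hg] e; exists g => x; rewrite -e. Qed.
Lemma upf_const c : upf (fun _ => c).
Proof. by exists c%:P => x; rewrite hornerC. Qed.
Lemma upf_id : upf (fun x => x).
Proof. by exists 'X => x; rewrite hornerX. Qed.
Lemma upf_add h h' : upf h -> upf h' -> upf (fun x => h x + h' x).
Proof. by move=> [g hg] [g' hg']; exists (g + g') => x; rewrite hornerD hg hg'. Qed.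
Lemma upf_mul h h' : upf h -> upf h' -> upf (fun x => h x * h' x).
Proof. by move=> [g hg] [g' hg']; exists (g * g') => x; rewrite hornerM hg hg'. Qed.

Lemma upf_hor (c : {poly K}) X : upf X -> upf (fun x => c.[X x]).
Proof.
move=> HX; elim/poly_ind: c => [|c k IH].
  by apply: upf_ext (upf_const 0) _ => x; rewrite horner0.
apply: upf_ext (upf_add (upf_mul IH HX) (upf_const k)) _ => x.
by rewrite hornerMXaddC.
Qed.

Lemma upf_ev2 g X1 X2 : upf X1 -> upf X2 -> upf (fun x => ev2 g (X1 x, X2 x)).
Proof.
move=> H1 H2; elim/poly_ind: g => [|g c IH].
  by apply: upf_ext (upf_const 0) _ => x; rewrite ev2_0.
apply: upf_ext (upf_add (upf_mul IH H2) (upf_hor c H1)) _ => x.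
by rewrite ev2MXaddC.
Qed.

Lemma poly_inf_roots (r : {poly K}) (z : nat -> K) :
  injective z -> (forall k, r.[z k] = 0) -> r = 0.
Proof.
move=> zi hz; apply/eqP; apply/negPn/negP => nz.
have hall : all (root r) (map z (iota 0 (size r))).
  by apply/allP => x /mapP [k _ ->]; apply/rootP; exact: hz.
have hu : uniq (map z (iota 0 (size r))) by rewrite map_inj_uniq // iota_uniq.
by have := max_poly_roots nz hall hu; rewrite size_map size_iota ltnn.
Qed.

Hypothesis hc : [pchar K] =i pred0.

Lemma natr_injK : injective (fun n : nat => n%:R : K).
Proof.
move=> m n /= e.
have H := (pcharf0P K).1 hc.
wlog le : m n e / (m <= n)%N.
  move=> W; case: (leqP m n) => [|/ltnW] h; first exact: W.
  by apply/esym/W.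
move: e; rewrite -(subnKC le) natrD => e.
have : (n - m)%:R == 0 :> K by apply/eqP; apply: (@addrI _ m%:R); rewrite -e addr0.
by rewrite H => /eqP ->; rewrite addn0.
Qed.

Lemma two_neq0 : (2 : K) != 0.
Proof. by have := (pcharf0P K).1 hc 2; rewrite /= => ->. Qed.


Inductive P2 : (pt K -> K -> K) -> Prop :=
| P2c h : pf h -> P2 (fun p _ => h p)
| P2t : P2 (fun _ t => t)
| P2add E1 E2 : P2 E1 -> P2 E2 -> P2 (fun p t => E1 p t + E2 p t)
| P2mul E1 E2 : P2 E1 -> P2 E2 -> P2 (fun p t => E1 p t * E2 p t)
| P2ext E1 E2 : P2 E1 -> (forall p t, E1 p t = E2 p t) -> P2 E2.

Inductive P3 : (pt K -> K -> K) -> Prop :=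
| P3c h : pf h -> P3 (fun p _ => h p)
| P3s : P3 (fun _ s => s)
| P3add E1 E2 : P3 E1 -> P3 E2 -> P3 (fun p t => E1 p t + E2 p t)
| P3mul E1 E2 : P3 E1 -> P3 E2 -> P3 (fun p t => E1 p t * E2 p t)
| P3ext E1 E2 : P3 E1 -> (forall p t, E1 p t = E2 p t) -> P3 E2.

Lemma P2_clear (N : pt K -> K) : pf N -> forall E, P2 E ->
  exists n0, forall n, (n0 <= n)%N -> exists g, forall p, N p != 0 ->
    N p ^+ n * E p (N p)^-1 = ev2 g p.
Proof.
move=> HN E; elim=> {E}.
- move=> h hh; exists 0%N => n _.
  have [g hg] := pf_mul (pf_pow n HN) hh; exists g => p _; exact: hg.
- exists 1%N => n; case: n => // n _.
  have [g hg] := pf_pow n HN; exists g => p np.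
  by rewrite exprS mulrC mulrA mulVf // mul1r hg.
- move=> E1 E2 _ [n1 h1] _ [n2 h2]; exists (maxn n1 n2) => n hn.
  have [g1 hg1] := h1 n (leq_trans (leq_maxl _ _) hn).
  have [g2 hg2] := h2 n (leq_trans (leq_maxr _ _) hn).
  exists (g1 + g2) => p np; by rewrite ev2D -hg1 // -hg2 // mulrDr.
- move=> E1 E2 _ [n1 h1] _ [n2 h2]; exists (n1 + n2)%N => n hn.
  have [g1 hg1] := h1 n1 (leqnn _).
  have hn2 : (n2 <= n - n1)%N by rewrite leq_subRL // (leq_trans (leq_addr _ _) hn).
  have [g2 hg2] := h2 _ hn2.
  exists (g1 * g2) => p np; rewrite ev2M -hg1 // -hg2 //.
  rewrite -{1}(subnKC (leq_trans (leq_addr n2 n1) hn)) exprD.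
  by rewrite mulrACA.
- move=> E1 E2 _ [n0 h] e; exists n0 => n hn.
  have [g hg] := h n hn; exists g => p np; by rewrite -e hg.
Qed.

Lemma P3_split H : P3 H -> exists E O, P2 E /\ P2 O /\
  forall p s, H p s = E p (s ^+ 2) + s * O p (s ^+ 2).
Proof.
elim=> {H}.
- move=> h hh; exists (fun p _ => h p), (fun _ _ => 0); split; first exact: P2c.
  split; first exact: P2c (pf_const 0).
  by move=> p s; rewrite mulr0 addr0.
- exists (fun _ _ => 0), (fun _ _ => 1); split; first exact: P2c (pf_const 0).
  split; first exact: P2c (pf_const 1).
  by move=> p s; rewrite mulr1 add0r.
- move=> E1 E2 _ [A1 [O1 [hA1 [hO1 e1]]]] _ [A2 [O2 [hA2 [hO2 e2]]]].
  exists (fun p t => A1 p t + A2 p t), (fun p t => O1 p t + O2 p t).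
  split; first exact: P2add. split; first exact: P2add.
  move=> p s; rewrite e1 e2; ring.
- move=> E1 E2 _ [A1 [O1 [hA1 [hO1 e1]]]] _ [A2 [O2 [hA2 [hO2 e2]]]].
  exists (fun p t => A1 p t * A2 p t + t * (O1 p t * O2 p t)),
         (fun p t => A1 p t * O2 p t + O1 p t * A2 p t).
  split; first exact: P2add (P2mul hA1 hA2) (P2mul P2t (P2mul hO1 hO2)).
  split; first exact: P2add (P2mul hA1 hO2) (P2mul hO1 hA2).
  move=> p s; rewrite e1 e2; ring.
- move=> E1 E2 _ [A [O [hA [hO e]]]] e'; exists A, O; split => //; split => //.
  by move=> p s; rewrite -e'.
Qed.

Lemma P3_hor (c : {poly K}) X : P3 X -> P3 (fun p s => c.[X p s]).
Proof.
move=> HX; elim/poly_ind: c => [|c k IH].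
  by apply: P3ext (P3c (pf_const 0)) _ => p s; rewrite horner0.
apply: P3ext (P3add (P3mul IH HX) (P3c (pf_const k))) _ => p s.
by rewrite hornerMXaddC.
Qed.

Lemma P3_ev2 g X1 X2 : P3 X1 -> P3 X2 -> P3 (fun p s => ev2 g (X1 p s, X2 p s)).
Proof.
move=> H1 H2; elim/poly_ind: g => [|g c IH].
  by apply: P3ext (P3c (pf_const 0)) _ => p s; rewrite ev2_0.
apply: P3ext (P3add (P3mul IH H2) (P3_hor c H1)) _ => p s.
by rewrite ev2MXaddC.
Qed.

Lemma sqrt_ex (x : K) : exists m : K, m ^+ 2 = x.
Proof.
have [m hm] := @solve_monicpoly K 2 (fun i => if i == 0%N then x else 0) isT.
exists m; rewrite hm big_ord_recr big_ord_recr big_ord0 /=.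
by rewrite mul0r addr0 add0r expr0 mulr1.
Qed.

End Basic.


Section Main.
Variable K : closedFieldType.
Variables (f : {poly {poly K}}) (a b d : K).
Hypothesis hc : [pchar K] =i pred0.
Hypothesis hd : d != 0.
Hypothesis firr : irreducible_elt f.

Lemma horner_comp2 (g : {poly {poly K}}) (c : {poly K}) x : (g.[c]).[x] = ev2 g (x, c.[x]).
Proof.
elim/poly_ind: g => [|g k IH]; first by rewrite horner0 ev2_0 horner0.
by rewrite hornerMXaddC hornerD hornerM IH ev2MXaddC.
Qed.

Lemma curve_fact q l : f = q * l -> ~~ (l \is a GRing.unit) ->
  forall p, curve f p <-> ev2 l p = 0.
Proof.
move=> e nl p; have [_ [_ H]] := firr.
have qu : q \is a GRing.unit by case: (H q l e) => // lu; rewrite lu in nl.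
rewrite /curve e ev2M; split; last by move=> ->; rewrite mulr0.
by move/eqP; rewrite mulf_eq0 (negbTE (ev2_unit p qu)) /= => /eqP.
Qed.

Lemma line_of_vanish v1 v2 : (v1 != 0 \/ v2 != 0) ->
  (forall l, ev2 f (a + l * v1, b + l * v2) = 0) -> is_line_through f a b.
Proof.
move=> hv hvan.
case: (eqVneq v1 0) => [v10|v1n0].
- have v2n0 : v2 != 0 by case: hv => //; rewrite v10 eqxx.
  have hy : forall y, ev2 f (a, y) = 0.
    move=> y; have := hvan ((y - b) / v2); rewrite v10 mulr0 addr0.
    by rewrite divfK // addrC subrK.
  set mf := map_poly (horner_eval a) f.
  have hmf : forall y, mf.[y] = ev2 f (a, y).
    move=> y; have := horner_map (horner_eval a) f y%:P.
    by rewrite /= !horner_evalE hornerC.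
  have mf0 : mf = 0.
    by apply: (poly_inf_roots (natr_injK hc)) => k; rewrite hmf hy.
  have hroot : forall i, root (f`_i) a.
    move=> i; apply/rootP; have := congr1 (fun r : {poly K} => r`_i) mf0.
    by rewrite /mf coef_map /= horner_evalE coef0.
  pose q := \poly_(i < size f) (f`_i %/ ('X - a%:P)).
  have fq : f = q * ('X - a%:P)%:P.
    apply/polyP => i; rewrite coefMC coef_poly; case: ltnP => hi.
      by rewrite divpK // -root_factor_theorem.
    by rewrite nth_default // mul0r.
  have nu : ~~ (('X - a%:P)%:P \is a GRing.unit).
    rewrite poly_unitE size_polyC polyXsubC_eq0 /= coefC /=.
    by rewrite poly_unitE size_XsubC.
  have hl := curve_fact fq nu.
  exists 1, 0, (- a); split; first by left; exact: oner_neq0.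
  split; first by ring.
  move=> p; rewrite hl /ev2 hornerC hornerXsubC.
  by rewrite mul1r mul0r addr0.
- pose c : {poly K} := (v2 / v1)%:P * ('X - a%:P) + b%:P.
  have hcx : forall x, c.[x] = v2 / v1 * (x - a) + b.
    by move=> x; rewrite /c hornerD hornerM hornerXsubC !hornerC.
  have fc0 : f.[c] = 0.
    apply: (poly_inf_roots (natr_injK hc)) => k.
    rewrite horner_comp2 hcx.
    have := hvan ((k%:R - a) / v1).
    suff -> : (a + (k%:R - a) / v1 * v1, b + (k%:R - a) / v1 * v2)
       = (k%:R, v2 / v1 * (k%:R - a) + b) by [].
    by congr (_, _); field.
  have [q fq] : exists q, f = q * ('X - c%:P).
    by apply/factor_theorem; apply/rootP.
  have nu : ~~ (('X - c%:P) \is a GRing.unit).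
    by rewrite poly_unitE size_XsubC.
  have hl := curve_fact fq nu.
  exists (- (v2 / v1)), 1, (v2 / v1 * a - b); split; first by right; exact: oner_neq0.
  split; first by ring.
  move=> p; rewrite hl /ev2 hornerD hornerN hornerX hornerC hornerD hornerN hornerC.
  rewrite -/(ev2 _ _) -[c.[p.1]]/(c.[p.1]) hcx.
  suff -> : - (v2 / v1) * p.1 + 1 * p.2 + (v2 / v1 * a - b) = p.2 - (v2 / v1 * (p.1 - a) + b) by [].
  ring.
Qed.


Definition Nf (p : pt K) := (p.1 - a) ^+ 2 + (p.2 - b) ^+ 2.
Definition Ff (p : pt K) (s : K) := ev2 f (p.1 + s * d * (p.1 - a), p.2 + s * d * (p.2 - b)).

Lemma pf_N : pf Nf.
Proof.
apply: pf_add; apply: pf_pow; apply: pf_add; (exact: pf_fst || exact: pf_snd || exact: pf_const).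
Qed.

Lemma Ecert : exists G, (forall p, Nf p = 0 -> ev2 G p = 0) /\
  (forall p mu, mu ^+ 2 = Nf p -> mu != 0 ->
     (ev2 G p == 0) = (Ff p mu^-1 + Ff p (- mu^-1) == 0)).
Proof.
have P3F : P3 Ff.
  have H1 : forall (pr : pt K -> K) (c : K), pf pr ->
      P3 (fun p s => pr p + s * d * (pr p - c)).
    move=> pr c hpr.
    have _ := (P3add (P3c hpr) (P3mul (P3mul (P3s K) (P3c (pf_const d)))
       (P3c (pf_add hpr (pf_const (- c)))))).
    by apply: (P3ext (P3add (P3c hpr) (P3mul (P3mul (P3s K) (P3c (pf_const d)))
       (P3c (pf_add hpr (pf_const (- c))))))).
  by apply: (P3ext (P3_ev2 f (H1 _ a (pf_fst K)) (H1 _ b (pf_snd K)))).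
have [E [O [hE [hO eF]]]] := P3_split P3F.
have [n0 hn] := P2_clear pf_N hE.
have [g hg] := hn n0 (leqnn _).
have [gN hgN] := pf_N.
exists (gN * g); split.
  by move=> p hp; rewrite ev2M -hgN hp mul0r.
move=> p mu hmu mu0.
have Nn0 : Nf p != 0 by rewrite -hmu expf_neq0.
rewrite ev2M -hgN -hg // !eF sqrrN exprVn hmu.
rewrite (_ : _ + _ = 2 * E p (Nf p)^-1); last by ring.
by rewrite !mulf_eq0 (negbTE Nn0) expf_eq0 (negbTE Nn0) andbF (negbTE (two_neq0 hc)).
Qed.

Lemma fiber_alg (x1 x2 y1 y2 w mu : K) :
  (x1 - y1) ^+ 2 + (x2 - y2) ^+ 2 = d ^+ 2 ->
  (y2 - b) * (x1 - y1) - (y1 - a) * (x2 - y2) = 0 ->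
  w * ((y1 - a) ^+ 2 + (y2 - b) ^+ 2) = 1 ->
  mu ^+ 2 = (x1 - a) ^+ 2 + (x2 - b) ^+ 2 -> mu != 0 ->
  exists eps, (eps = mu^-1 \/ eps = - mu^-1) /\
    y1 = x1 + eps * d * (x1 - a) /\ y2 = x2 + eps * d * (x2 - b).
Proof.
move=> H1 H2 H3 HN mu0.
set k := w * ((x1 - y1) * (y1 - a) + (x2 - y2) * (y2 - b)).
have E1 : x1 - y1 = k * (y1 - a).
  apply/eqP; rewrite -subr_eq0; apply/eqP.
  rewrite (_ : _ - _ = w * (y2 - b) * ((y2 - b) * (x1 - y1) - (y1 - a) * (x2 - y2))
     + (x1 - y1) * (1 - w * ((y1 - a) ^+ 2 + (y2 - b) ^+ 2))); last by rewrite /k; ring.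
  by rewrite H2 H3 subrr !mulr0 addr0.
have E2 : x2 - y2 = k * (y2 - b).
  apply/eqP; rewrite -subr_eq0; apply/eqP.
  rewrite (_ : _ - _ = - (w * (y1 - a) * ((y2 - b) * (x1 - y1) - (y1 - a) * (x2 - y2)))
     + (x2 - y2) * (1 - w * ((y1 - a) ^+ 2 + (y2 - b) ^+ 2))); last by rewrite /k; ring.
  by rewrite H2 H3 subrr !mulr0 oppr0 addr0.
set n := (y1 - a) ^+ 2 + (y2 - b) ^+ 2.
have Hd : d ^+ 2 = k ^+ 2 * n by rewrite -H1 E1 E2 /n; ring.
have Ea : x1 - a = (1 + k) * (y1 - a).
  by rewrite (_ : x1 - a = (x1 - y1) + (y1 - a)); [rewrite E1; ring | ring].
have Eb : x2 - b = (1 + k) * (y2 - b).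
  by rewrite (_ : x2 - b = (x2 - y2) + (y2 - b)); [rewrite E2; ring | ring].
have Hm : mu ^+ 2 = (1 + k) ^+ 2 * n by rewrite HN Ea Eb /n; ring.
clearbody k n.
have Hsq : (k * mu) ^+ 2 = (d * (1 + k)) ^+ 2.
  rewrite !exprMn Hm Hd; ring.
move/eqP: Hsq; rewrite eqf_sqr => /orP [] /eqP hk.
- have hk' : mu^-1 * (d * (1 + k)) - k = 0.
    by rewrite -hk mulrC mulfK // subrr.
  exists (- mu^-1); split; first by right.
  split; apply/eqP; rewrite -subr_eq0; apply/eqP.
  + rewrite Ea (_ : _ - _ = (mu^-1 * (d * (1 + k)) - k) * (y1 - a) - (x1 - y1 - k * (y1 - a))); last by ring.
    by rewrite hk' E1; ring.
  + rewrite Eb (_ : _ - _ = (mu^-1 * (d * (1 + k)) - k) * (y2 - b) - (x2 - y2 - k * (y2 - b))); last by ring.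
    by rewrite hk' E2; ring.
- have hk' : mu^-1 * (d * (1 + k)) + k = 0.
    by rewrite -{2}(mulfK mu0 k) hk; ring.
  exists (mu^-1); split; first by left.
  split; apply/eqP; rewrite -subr_eq0; apply/eqP.
  + rewrite Ea (_ : _ - _ = - ((mu^-1 * (d * (1 + k)) + k) * (y1 - a)) - (x1 - y1 - k * (y1 - a))); last by ring.
    by rewrite hk' E1; ring.
  + rewrite Eb (_ : _ - _ = - ((mu^-1 * (d * (1 + k)) + k) * (y2 - b)) - (x2 - y2 - k * (y2 - b))); last by ring.
    by rewrite hk' E2; ring.
Qed.

Lemma fiber_form Q y w mu : Bset f a b d Q y w -> mu ^+ 2 = Nf Q -> mu != 0 ->
  exists eps, (eps = mu^-1 \/ eps = - mu^-1) /\ Ff Q eps = 0 /\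
     y = (Q.1 + eps * d * (Q.1 - a), Q.2 + eps * d * (Q.2 - b)).
Proof.
case: Q y => [x1 x2] [y1 y2] [hf [H1 [H2 H3]]] HN mu0.
have [eps [he [e1 e2]]] := fiber_alg H1 H2 H3 HN mu0.
exists eps; split => //.
have ey : (y1, y2) = (x1 + eps * d * (x1 - a), x2 + eps * d * (x2 - b)) by rewrite -e1 -e2.
by split => //; rewrite /Ff -ey.
Qed.

Lemma Bset_line v1 v2 l m : v1 ^+ 2 + v2 ^+ 2 = 1 -> ev2 f (a + l * v1, b + l * v2) = 0 ->
  l != 0 -> (m - l) ^+ 2 = d ^+ 2 ->
  Bset f a b d (a + m * v1, b + m * v2) (a + l * v1, b + l * v2) (l ^+ 2)^-1.
Proof.
move=> hv hf l0 hml; split => //=; split.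
  rewrite (_ : _ + _ = (m - l) ^+ 2 * (v1 ^+ 2 + v2 ^+ 2)); last by ring.
  by rewrite hv mulr1.
split; first by ring.
rewrite (_ : _ + _ = l ^+ 2 * (v1 ^+ 2 + v2 ^+ 2)); last by ring.
by rewrite hv mulr1 mulVf // expf_neq0.
Qed.

Lemma chain_line v1 v2 l0 : v1 ^+ 2 + v2 ^+ 2 = 1 ->
  ev2 f (a + l0 * v1, b + l0 * v2) = 0 -> (forall m : nat, l0 + m%:R * d != 0) ->
  (forall l, l != 0 -> l + d != 0 -> ev2 f (a + l * v1, b + l * v2) = 0 ->
      ev2 f (a + (l + 2 * d) * v1, b + (l + 2 * d) * v2) = 0) ->
  is_line_through f a b.
Proof.
move=> hv hf0 hm step.
pose z (k : nat) := l0 + k%:R * (2 * d).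
have zk : forall k, z k = l0 + (k * 2)%:R * d by move=> k; rewrite /z natrM; ring.
have zk1 : forall k, z k + d = l0 + (k * 2).+1%:R * d by move=> k; rewrite zk mulrSr; ring.
have hall : forall k, ev2 f (a + z k * v1, b + z k * v2) = 0.
  elim=> [|k IH]; first by rewrite /z mul0r addr0.
  have -> : z k.+1 = z k + 2 * d by rewrite /z mulrSr; ring.
  by apply: step => //; [rewrite zk | rewrite zk1].
have [r hr] := upf_ev2 f (upf_add (upf_const a) (upf_mul (upf_id K) (upf_const v1)))
                        (upf_add (upf_const b) (upf_mul (upf_id K) (upf_const v2))).
have r0 : r = 0.
  apply: (poly_inf_roots (z := z)) => [m n /= e|k]; last by rewrite -hr hall.
  apply: (natr_injK hc); apply: (mulIf (_ : 2 * d != 0)).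
    by rewrite mulf_neq0 // two_neq0.
  by move: e; rewrite /z => /addrI.
apply: (line_of_vanish (v1 := v1) (v2 := v2)).
  case: (eqVneq v1 0) => [e1|]; last by left.
  right; apply/eqP => e2; move: hv; rewrite e1 e2 expr0n addr0 => /eqP.
  by rewrite eq_sym oner_eq0.
by move=> l; rewrite hr r0 horner0.
Qed.

End Main.


Section Zar.
Variable K : closedFieldType.

Lemma zcl_sub (S : pt K -> Prop) : subset_pt S (zcl S).
Proof. by move=> p Sp g hg; apply: hg. Qed.

Lemma zcl_closed (S : pt K -> Prop) : zclosed (zcl S).
Proof. by move=> p hp g hg; apply: hp => q hq; apply: hq. Qed.

Lemma V_closed (g : {poly {poly K}}) : zclosed (fun p => ev2 g p = 0).
Proof. by move=> p hp; apply: hp. Qed.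

Lemma not_sub (S T : pt K -> Prop) : ~ subset_pt S T -> exists p, S p /\ ~ T p.
Proof.
move=> nS; apply: NNPP => H; apply: nS => p Sp; apply: NNPP => nT.
by apply: H; exists p.
Qed.

Lemma not_zcl (S : pt K -> Prop) p : ~ zcl S p ->
  exists g, (forall q, S q -> ev2 g q = 0) /\ ev2 g p != 0.
Proof.
move=> nz; apply: NNPP => H; apply: nz => g hg; apply/eqP; apply: NNPP => ne.
by apply: H; exists g; split => //; apply/negP.
Qed.
End Zar.

Section Final.
Variable K : closedFieldType.
Variables (f : {poly {poly K}}) (a b d : K).
Hypothesis hc : [pchar K] =i pred0.
Hypothesis hd : d != 0.
Hypothesis firr : irreducible_elt f.

Definition PP := fun x => exists y w, Bset f a b d x y w.

Lemma dir1 : irreducible_set (conchoid f a b d) ->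
  special_component f a b d (conchoid f a b d) ->
  (exists p, C0 f a b p) -> is_line_through f a b.
Proof.
move=> Hirr Hsp [p0 [hp0 hN0]].
have [G [hG0 hG]] := Ecert f a b d hc.
case: (classic (exists Q, PP Q /\ ev2 G Q != 0)) => [[Q0 [PQ0 GQ0]] | nB].
  exfalso; apply: Hsp.2; split; first exact: Hsp.1.
  pose Om := fun Q => PP Q /\ ev2 G Q != 0.
  exists Om; split; first by move=> Q [PQ _]; exact: zcl_sub.
  split; first by exists Q0.
  split.
    have [_ [_ Hirr3]] := Hirr.
    case: (Hirr3 (fun p => ev2 G p = 0) (zcl Om) (@V_closed _ G) (@zcl_closed _ Om)) => //.
      move=> Q hQ; case: (eqVneq (ev2 G Q) 0) => [->|nz]; [by left | right].
      move=> g hg.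
      have : ev2 (g * G) Q = 0.
        apply: hQ => q [y [w hB]]; rewrite ev2M.
        case: (eqVneq (ev2 G q) 0) => [->|nq]; first by rewrite mulr0.
        by rewrite hg ?mul0r //; split => //; exists y, w.
      by rewrite ev2M => /eqP; rewrite mulf_eq0 (negbTE nz) orbF => /eqP.
    move=> H1; exfalso; move/eqP: GQ0; apply; apply: H1; exact: zcl_sub.
  move=> Q [[y [w hB]] GQ]; exists y; split; first by exists w.
  move=> y' [w' hB'].
  have NQ : Nf a b Q != 0 by apply/eqP => e; move/eqP: GQ; apply; apply: hG0.
  have [mu hmu] := sqrt_ex (Nf a b Q).
  have mu0 : mu != 0 by apply/eqP => e; move: NQ; rewrite -hmu e expr0n eqxx.
  have [e [he [Fe ey]]] := fiber_form hB hmu mu0.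
  have [e' [he' [Fe' ey']]] := fiber_form hB' hmu mu0.
  have HH : Ff f a b d Q mu^-1 = 0 -> Ff f a b d Q (- mu^-1) = 0 -> False.
    move=> h1 h2; have := hG _ _ hmu mu0; rewrite h1 h2 addr0 eqxx.
    by move/eqP: GQ => GQ /eqP.
  case: he => ->> in Fe ey *; case: he' => ->> in Fe' ey' *; rewrite ?ey ?ey' //.
    by exfalso; apply: HH.
  by exfalso; apply: HH.
have HB : forall Q, PP Q -> ev2 G Q = 0.
  move=> Q PQ; case: (eqVneq (ev2 G Q) 0) => // nz; exfalso; apply: nB; by exists Q.
have step : forall v1 v2, v1 ^+ 2 + v2 ^+ 2 = 1 -> forall l, l != 0 -> l + d != 0 ->
    ev2 f (a + l * v1, b + l * v2) = 0 ->
    ev2 f (a + (l + 2 * d) * v1, b + (l + 2 * d) * v2) = 0.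
  move=> v1 v2 hv l l0 ld hf.
  have hml : (l + d - l) ^+ 2 = d ^+ 2 by ring.
  have hB := Bset_line hv hf l0 hml.
  have PQ : PP (a + (l + d) * v1, b + (l + d) * v2).
    by exists (a + l * v1, b + l * v2), (l ^+ 2)^-1.
  have GQ := HB _ PQ.
  have hN : (l + d) ^+ 2 = Nf a b (a + (l + d) * v1, b + (l + d) * v2).
    rewrite /Nf /= (_ : _ + _ = (l + d) ^+ 2 * (v1 ^+ 2 + v2 ^+ 2)); last by ring.
    by rewrite hv mulr1.
  have := hG _ _ hN ld; rewrite GQ eqxx => /esym /eqP.
  rewrite /Ff /=.
  have -> : (a + (l + d) * v1 + - (l + d)^-1 * d * (a + (l + d) * v1 - a),
        b + (l + d) * v2 + - (l + d)^-1 * d * (b + (l + d) * v2 - b))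
        = (a + l * v1, b + l * v2) by congr (_, _); field.
  rewrite hf addr0.
  have -> : (a + (l + d) * v1 + (l + d)^-1 * d * (a + (l + d) * v1 - a),
        b + (l + d) * v2 + (l + d)^-1 * d * (b + (l + d) * v2 - b))
        = (a + (l + 2 * d) * v1, b + (l + 2 * d) * v2) by congr (_, _); field.
  by [].
set X := p0.1 - a; set Y := p0.2 - b.
have [nu hnu] := sqrt_ex (X ^+ 2 + Y ^+ 2).
have nu0 : nu != 0 by apply/eqP => e; move: hN0; rewrite -/X -/Y -hnu e expr0n eqxx.
have hv : (X / nu) ^+ 2 + (Y / nu) ^+ 2 = 1.
  have -> : (X / nu) ^+ 2 + (Y / nu) ^+ 2 = (X ^+ 2 + Y ^+ 2) / nu ^+ 2 by field.
  by rewrite -hnu divff // expf_neq0.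
have hf0 : ev2 f (a + nu * (X / nu), b + nu * (Y / nu)) = 0.
  rewrite (_ : (a + nu * (X / nu), b + nu * (Y / nu)) = p0) //.
  rewrite /X /Y; case: p0 {hp0 hN0 X Y hnu hv} => x y /=; by congr (_, _); field.
case: (classic (exists m : nat, nu + m%:R * d = 0)) => [[m0 hm0] | nm].
  have hv' : (- (X / nu)) ^+ 2 + (- (Y / nu)) ^+ 2 = 1 by rewrite !sqrrN.
  apply: (chain_line (l0 := - nu) hc hd firr hv').
  - by rewrite !mulrNN.
  - move=> m; apply/eqP => e.
    have : (m + m0)%:R * d = 0.
      rewrite (_ : (m + m0)%:R * d = (- nu + m%:R * d) + (nu + m0%:R * d)).
        by rewrite e hm0 addr0.
      by rewrite natrD; ring.
    move/eqP; rewrite mulf_eq0 (negbTE hd) orbF ((pcharf0P K).1 hc) addn_eq0 => /andP [_ /eqP m00].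
    by move: hm0; rewrite m00 mul0r addr0 => /eqP; rewrite (negbTE nu0).
  - move=> l l0 ld hf; exact: (step _ _ hv' l l0 ld hf).
apply: (chain_line (l0 := nu) hc hd firr hv hf0).
  by move=> m; apply/eqP => e; apply: nm; exists m.
exact: step.
Qed.


Lemma on_line (al be X Y : K) : (al != 0 \/ be != 0) -> al * X + be * Y = 0 ->
  exists t, X = - be * t /\ Y = al * t.
Proof.
move=> hab e.
case: (eqVneq al 0) => [al0|aln].
  have ben : be != 0 by case: hab => //; rewrite al0 eqxx.
  exists (- X / be); split; first by field.
  move: e; rewrite al0 mul0r add0r => /eqP; rewrite mulf_eq0 (negbTE ben) /= => /eqP ->.
  by rewrite mul0r.
exists (Y / al); split; last by field.
have -> : X = (al * X + be * Y) / al - be * Y / al by field.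
by rewrite e; field.
Qed.

Lemma dir2 : is_line_through f a b -> (exists p, C0 f a b p) ->
  irreducible_set (conchoid f a b d) /\ special_component f a b d (conchoid f a b d).
Proof.
move=> [al [be [ga [hab [hA hcurve]]]]] [p0 [hp0 hN0]].
have hcv : forall p, curve f p <-> al * (p.1 - a) + be * (p.2 - b) = 0.
  move=> p; rewrite hcurve.
  have -> : al * p.1 + be * p.2 + ga = al * (p.1 - a) + be * (p.2 - b) + (al * a + be * b + ga) by ring.
  by rewrite hA addr0.
have [t0 [et1 et2]] := on_line hab ((hcv p0).1 hp0).
have nn0 : al ^+ 2 + be ^+ 2 != 0.
  apply/eqP => e; move: hN0; rewrite et1 et2.
  rewrite (_ : _ + _ = t0 ^+ 2 * (al ^+ 2 + be ^+ 2)); last by ring.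
  by rewrite e mulr0 eqxx.
have [nu hnu] := sqrt_ex (al ^+ 2 + be ^+ 2).
have nu0 : nu != 0 by apply/eqP => e; move: nn0; rewrite -hnu e expr0n eqxx.
pose v1 := - be / nu; pose v2 := al / nu.
have hv : v1 ^+ 2 + v2 ^+ 2 = 1.
  have -> : v1 ^+ 2 + v2 ^+ 2 = (al ^+ 2 + be ^+ 2) / nu ^+ 2 by rewrite /v1 /v2; field.
  by rewrite -hnu divff // expf_neq0.
have hL : forall p, curve f p <-> exists l, p = (a + l * v1, b + l * v2).
  move=> p; rewrite hcv; split.
    move=> e; have [t [e1 e2]] := on_line hab e; exists (t * nu).
    case: p e e1 e2 => x y /= _ e1 e2; congr (_, _).
      by rewrite -(subrK a x) e1 /v1 addrC; congr (_ + _); field.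
    by rewrite -(subrK b y) e2 /v2 addrC; congr (_ + _); field.
  by move=> [l ->] /=; rewrite /v1 /v2; field.

have hPc : forall x, PP x -> curve f x.
  move=> [x1 x2] [[y1 y2] [w [hf [H1 [H2 H3]]]]] /=.
  have [l ey] := (hL _).1 hf; case: ey => ey1 ey2.
  move: H1 H2 H3; rewrite /= ey1 ey2 => H1 H2 H3.
  have l0 : l != 0.
    apply/eqP => l0; move: H3; rewrite l0 !mul0r !addr0 !subrr expr0n addr0 mulr0.
    by move/eqP; rewrite eq_sym oner_eq0.
  have hcr : l * (v2 * (x1 - (a + l * v1)) - v1 * (x2 - (b + l * v2))) = 0.
    by rewrite -H2; ring.
  move/eqP: hcr; rewrite mulf_eq0 (negbTE l0) /= => /eqP hcr.
  apply/hcv => /=.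
  have -> : al = nu * v2 by rewrite /v2; field.
  have -> : be = - (nu * v1) by rewrite /v1; field.
  rewrite (_ : _ + _ = nu * (v2 * (x1 - (a + l * v1)) - v1 * (x2 - (b + l * v2)))); last by ring.
  by rewrite hcr mulr0.
have hconch : forall p, conchoid f a b d p <-> curve f p.
  move=> p; split.
    by move=> hp; apply: hp => q hq; apply: hPc.
  move=> /(hL _).1 [l ->] g hg.
  have [r hr] := upf_ev2 g (upf_add (upf_const a) (upf_mul (upf_id K) (upf_const v1)))
                          (upf_add (upf_const b) (upf_mul (upf_id K) (upf_const v2))).
  have r0 : r = 0.
    apply: (poly_inf_roots (z := fun k : nat => d + k.+1%:R)).
      by move=> m n /= /addrI /(natr_injK hc) [].
    move=> k; rewrite -hr; apply: hg.
    exists (a + k.+1%:R * v1, b + k.+1%:R * v2), ((k.+1%:R) ^+ 2)^-1.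
    apply: Bset_line => //.
    - by apply/(hL _).2; exists k.+1%:R.
    - by rewrite ((pcharf0P K).1 hc).
    - by rewrite addrK.
  by rewrite hr r0 horner0.
have conchA : conchoid f a b d (a, b).
  by apply/hconch/(hL _).2; exists 0; rewrite !mul0r !addr0.
have hrestr : forall g, exists r : {poly K}, forall x, ev2 g (a + x * v1, b + x * v2) = r.[x].
  move=> g.
  have [r hr] := upf_ev2 g (upf_add (upf_const a) (upf_mul (upf_id K) (upf_const v1)))
                   (upf_add (upf_const b) (upf_mul (upf_id K) (upf_const v2))).
  by exists r => x; rewrite -hr.
have hirr : irreducible_set (conchoid f a b d).
  split; first exact: zcl_closed.
  split; first by exists (a, b).
  move=> Z1 Z2 cZ1 cZ2 hcov.
  case: (classic (subset_pt (conchoid f a b d) Z1)) => h1; first by left.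
  case: (classic (subset_pt (conchoid f a b d) Z2)) => h2; first by right.
  exfalso.
  have [p1 [cp1 np1]] := not_sub h1.
  have [p2 [cp2 np2]] := not_sub h2.
  have [g1 [hg1 ng1]] := not_zcl (fun H => np1 (cZ1 _ H)).
  have [g2 [hg2 ng2]] := not_zcl (fun H => np2 (cZ2 _ H)).
  have [r1 hr1] := hrestr g1.
  have [r2 hr2] := hrestr g2.
  have r12 : r1 * r2 = 0.
    apply: (poly_inf_roots (natr_injK hc)) => k.
    rewrite hornerM -hr1 -hr2.
    have cp : conchoid f a b d (a + k%:R * v1, b + k%:R * v2).
      by apply/hconch/(hL _).2; exists k%:R.
    by case: (hcov _ cp) => hz; [rewrite hg1 ?mul0r | rewrite hg2 ?mulr0].
  have [l1 e1] := (hL _).1 ((hconch _).1 cp1).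
  have [l2 e2] := (hL _).1 ((hconch _).1 cp2).
  move/eqP: r12; rewrite mulf_eq0 => /orP [] /eqP r0.
    by move: ng1; rewrite e1 hr1 r0 horner0 eqxx.
  by move: ng2; rewrite e2 hr2 r0 horner0 eqxx.
split => //.
split.
  split => //; split => //.
move=> [_ [Om [hOm [[Q0 hQ0] [hdense huniq]]]]].
have [g hg] : pf (fun p : pt K => ((p.1 - a) * v1 + (p.2 - b) * v2) ^+ 2 - d ^+ 2).
  apply: pf_add; last exact: pf_const.
  apply: pf_pow; apply: pf_add; apply: pf_mul; try exact: pf_const.
    by apply: pf_add; [exact: pf_fst | exact: pf_const].
  by apply: pf_add; [exact: pf_snd | exact: pf_const].
have gOm : forall Q, Om Q -> ev2 g Q = 0.
  move=> Q hQ; rewrite -hg.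
  have [mu eQ] := (hL _).1 ((hconch _).1 (hOm _ hQ)).
  rewrite eQ /=.
  rewrite (_ : _ - _ = (mu - d) * (mu + d) + mu ^+ 2 * ((v1 ^+ 2 + v2 ^+ 2) ^+ 2 - 1)); last by ring.
  rewrite hv expr1n subrr mulr0 addr0.
  case: (eqVneq mu d) => [->|md]; first by rewrite subrr mul0r.
  case: (eqVneq mu (- d)) => [->|mnd]; first by rewrite addNr mulr0.
  exfalso.
  have [y [_ hy]] := huniq Q hQ.
  have fib : forall l, l != 0 -> (mu - l) ^+ 2 = d ^+ 2 ->
      fiber f a b d Q (a + l * v1, b + l * v2).
    move=> l l0 hl; rewrite eQ; exists ((l ^+ 2)^-1); apply: Bset_line => //.
    by apply/(hL _).2; exists l.
  have md0 : mu - d != 0 by rewrite subr_eq0.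
  have mpd0 : mu + d != 0 by rewrite -(opprK d) subr_eq0.
  have h1 : (mu - (mu - d)) ^+ 2 = d ^+ 2 by ring.
  have h2 : (mu - (mu + d)) ^+ 2 = d ^+ 2 by ring.
  have y1 := hy _ (fib _ md0 h1).
  have y2 := hy _ (fib _ mpd0 h2).
  have : (a + (mu - d) * v1, b + (mu - d) * v2) = (a + (mu + d) * v1, b + (mu + d) * v2).
    by rewrite y1 y2.
  case => e1 e2.
  move/addrI: e1 => e1; move/addrI: e2 => e2.
  have d2 : 2 * d != 0 by rewrite mulf_neq0 // two_neq0.
  have v10 : v1 = 0.
    have : (2 * d) * v1 = 0.
      rewrite (_ : 2 * d * v1 = (mu + d) * v1 - (mu - d) * v1); last by ring.
      by rewrite e1 subrr.
    by move/eqP; rewrite mulf_eq0 (negbTE d2) /= => /eqP.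
  have v20 : v2 = 0.
    have : (2 * d) * v2 = 0.
      rewrite (_ : 2 * d * v2 = (mu + d) * v2 - (mu - d) * v2); last by ring.
      by rewrite e2 subrr.
    by move/eqP; rewrite mulf_eq0 (negbTE d2) /= => /eqP.
  by move: hv; rewrite v10 v20 expr0n addr0 => /eqP; rewrite eq_sym oner_eq0.
have := hdense _ conchA g gOm; rewrite -hg /= !subrr !mul0r addr0 expr0n sub0r.
by move/eqP; rewrite oppr_eq0 expf_eq0 (negbTE hd) andbF.
Qed.

End Final.

Unset Implicit Arguments.

Theorem corollary2 (K : closedFieldType) (f : {poly {poly K}}) (a b d : K) :
  [pchar K] =i pred0 ->
  irreducible_elt f ->
  d != 0 ->
  (exists p, C0 f a b p) ->
  ~ is_circle_centered f a b ->
  (irreducible_set (conchoid f a b d) /\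
   special_component f a b d (conchoid f a b d))
  <-> is_line_through f a b.
Proof.
move=> hc firr hd hC0 _; split.
  by move=> [H1 H2]; exact: (dir1 hc hd firr H1 H2 hC0).
by move=> hl; exact: (dir2 hc hd hl hC0).
Qed.
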